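(* Let $N$ be a $2$-step nilpotent Lie group with a left invariant Riemannian metric, with the notation of the context, and let $\gamma$ be a geodesic of $N$ through the identity $e$ with tangent vector $X+Z$ at $e$, $X\in\mathcal V$, $Z\in\mathcal Z$. If the Gauss map of $\gamma$ is harmonic at $e$, then $J(Z)X=0$, and consequently $\gamma$ is (a reparametrization of an open part of) the one-parameter subgroup $t\mapsto\exp(t(X+Z))$. In particular, a geodesic in $N$ whose Gauss map is harmonic at a single point is a left translation of a one-parameter subgroup.
   Context: $N$ is $2$-step nilpotent: its Lie algebra $\mathcal N$ satisfies $[\mathcal N,\mathcal N]\ne0$, $[[\mathcal N,\mathcal N],\mathcal N]=0$. $\langle\cdot,\cdot\rangle$ is the inner product on $\mathcal N$ defining the left invariant metric, $\mathcal Z$ is the center of $\mathcal N$, $\mathcal V$ its orthogonal complement, and for $Z\in\mathcal Z$ the skew-symmetric operator $J(Z):\mathcal V\to\mathcal V$ is defined by $\langle J(Z)X,Y\rangle=\langle[X,Y],Z\rangle$ for all $X,Y\in\mathcal V$. The Gauss map of a curve assigns to each point $p$ the line $dL_{p^{-1}}(T_p\gamma)\subset\mathcal N$ in the Grassmannian of lines in $\mathcal N$ with its standard orthogonally invariant metric; harmonic at a point means vanishing of the tension field there. *)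

(* Defs.v *)
From Stdlib Require Import Reals.
Open Scope R_scope.

(* Model: the Lie algebra N is R^n in coordinates ORTHONORMAL for the inner
   product <.,.>; vectors are functions nat -> R of which only the
   components i < n are meaningful. The bracket is given by structure
   constants c i j k : [e_i, e_j] = sum_k c i j k e_k. *)
Definition vec := nat -> R.

Fixpoint rsum (n : nat) (f : nat -> R) : R :=
  match n with O => 0 | S k => rsum k f + f k end.

Definition vadd (x y : vec) : vec := fun i => x i + y i.
Definition vsub (x y : vec) : vec := fun i => x i - y i.
Definition vscale (a : R) (x : vec) : vec := fun i => a * x i.
Definition basis (j : nat) : vec := fun i => if Nat.eq_dec i j then 1 else 0.

Definition dot (n : nat) (x y : vec) : R := rsum n (fun i => x i * y i).
Definition vnorm (n : nat) (x : vec) : R := sqrt (dot n x x).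

Definition veq (n : nat) (x y : vec) : Prop := forall i, (i < n)%nat -> x i = y i.

Definition bracket (n : nat) (c : nat -> nat -> nat -> R) (x y : vec) : vec :=
  fun k => rsum n (fun i => rsum n (fun j => c i j k * x i * y j)).

(* N is a (real) Lie algebra (antisymmetric bracket; Jacobi is automatic for
   2-step nilpotent brackets) which is 2-step nilpotent. *)
Definition two_step_nilpotent (n : nat) (c : nat -> nat -> nat -> R) : Prop :=
  (forall i j k, (i < n)%nat -> (j < n)%nat -> (k < n)%nat -> c i j k = - c j i k) /\
  (forall x y w, veq n (bracket n c (bracket n c x y) w) (fun _ => 0)) /\
  (exists x y, ~ veq n (bracket n c x y) (fun _ => 0)).

Definition in_center (n : nat) c (z : vec) : Prop :=
  forall y, veq n (bracket n c z y) (fun _ => 0).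
Definition in_V (n : nat) c (x : vec) : Prop :=
  forall z, in_center n c z -> dot n x z = 0.

(* J(Z)X defined by <J(Z)X, Y> = <[X,Y], Z> : its j-th coordinate is
   <[X, e_j], Z>. *)
Definition Jmap (n : nat) c (z x : vec) : vec :=
  fun j => dot n (bracket n c x (basis j)) z.

(* The (simply connected) group N: the underlying space of the Lie algebra
   with the Baker-Campbell-Hausdorff product; exp is the identity map and e = 0. *)
Definition gmul (n : nat) c (p q : vec) : vec :=
  vadd (vadd p q) (vscale (1/2) (bracket n c p q)).

Definition dLinv (n : nat) c (p v : vec) : vec :=
  vsub v (vscale (1/2) (bracket n c p v)).

(* Levi-Civita connection on left invariant fields (Koszul formula):
   <nabla_x y, w> = 1/2 (<[x,y],w> - <[y,w],x> + <[w,x],y>). *)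
Definition nabla (n : nat) c (x y : vec) : vec :=
  fun k => / 2 * (dot n (bracket n c x y) (basis k)
                  - dot n (bracket n c y (basis k)) x
                  + dot n (bracket n c (basis k) x) y).

Definition vderiv (n : nat) (f : R -> vec) (t : R) (df : vec) : Prop :=
  forall i, (i < n)%nat -> derivable_pt_lim (fun s => f s i) t (df i).

Definition lvel (n : nat) c (g dg : R -> vec) (t : R) : vec :=
  dLinv n c (g t) (dg t).

(* gamma : (a,b) -> N is a geodesic with velocity dg: the covariant
   derivative of gamma' along gamma, written in a left invariant orthonormal
   frame, W' + nabla_W W, vanishes. *)
Definition is_geodesic (n : nat) c (g dg : R -> vec) (a b : R) : Prop :=
  (forall t, a < t < b -> vderiv n g t (dg t)) /\
  exists dW : R -> vec,
    forall t, a < t < b ->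
      vderiv n (lvel n c g dg) t (dW t) /\
      veq n (vadd (dW t) (nabla n c (lvel n c g dg t) (lvel n c g dg t))) (fun _ => 0).

(* Gauss map t |-> line R.W(t) in the Grassmannian of lines G_1(N) = RP^{n-1}
   with its O(n)-invariant metric. Locally it lifts isometrically (up to a
   constant factor, irrelevant for the tension) to u = W/|W| in the unit
   sphere. The domain carries the metric induced by N, i.e. |W(t)|^2 dt^2,
   so the tension field is
     tau = (1/|W|) D_t ( u'/|W| ),
   D_t being the tangential part of the ordinary derivative on the sphere. *)
Definition gauss_harmonic_at (n : nat) c (g dg : R -> vec) (t0 : R) : Prop :=
  let sp := fun t => vnorm n (lvel n c g dg t) in
  let u := fun t => vscale (/ sp t) (lvel n c g dg t) in
  exists (du : R -> vec) (dw : vec),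
    (exists d, 0 < d /\ forall t, Rabs (t - t0) < d -> vderiv n u t (du t)) /\
    vderiv n (fun t => vscale (/ sp t) (du t)) t0 dw /\
    let acc := vscale (/ sp t0) dw in
    veq n (vsub acc (vscale (dot n acc (u t0)) (u t0))) (fun _ => 0).

(* Main.v *)
Require Import Defs.
From Stdlib Require Import Reals Lra Lia FunctionalExtensionality.
Open Scope R_scope.

Lemma const_on (f : R -> R) a b t0 : a < t0 < b ->
  (forall t, a < t < b -> derivable_pt_lim f t 0) ->
  forall t, a < t < b -> f t = f t0.
Proof.
  intros Ht0 H t Ht.
  set (lo := Rmin t t0). set (hi := Rmax t t0).
  assert (Hin : forall x, lo <= x <= hi -> a < x < b).
  { intros x Hx. unfold lo, hi in Hx. unfold Rmin, Rmax in Hx.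
    destruct (Rle_dec t t0); lra. }
  assert (pr : forall x, lo < x < hi -> derivable_pt f x).
  { intros x Hx. exists 0. apply H, Hin; lra. }
  assert (Hc := null_derivative_loc f lo hi pr).
  assert (K : constant_D_eq f (fun x => lo <= x <= hi) (f lo)).
  { apply Hc.
    - intros x Hx. apply derivable_continuous_pt. exists 0. apply H, Hin; lra.
    - intros x P. destruct (pr x P) as [l Hl] eqn:E. simpl.
      apply (uniqueness_limite f x); [exact Hl| apply H, Hin; lra]. }
  unfold constant_D_eq in K.
  assert (lo <= t <= hi /\ lo <= t0 <= hi) as [A1 A2].
  { unfold lo, hi, Rmin, Rmax; destruct (Rle_dec t t0); lra. }
  rewrite (K t A1), (K t0 A2). reflexivity.
Qed.

Lemma deriv_local f g x l d : 0 < d -> (forall y, Rabs (y - x) < d -> f y = g y) ->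
  derivable_pt_lim g x l -> derivable_pt_lim f x l.
Proof.
  intros hd Heq Hg eps heps.
  destruct (Hg eps heps) as [del Hdel].
  assert (hm : 0 < Rmin del d) by (apply Rmin_pos; [apply cond_pos|exact hd]).
  exists (mkposreal _ hm). intros h hne hh. simpl in hh.
  rewrite (Heq (x+h)), (Heq x).
  - apply Hdel; auto. apply Rlt_le_trans with (1 := hh), Rmin_l.
  - replace (x - x) with 0 by ring. rewrite Rabs_R0. exact hd.
  - replace (x + h - x) with h by ring. apply Rlt_le_trans with (1 := hh), Rmin_r.
Qed.

Lemma deriv_rsum n (F : R -> nat -> R) (dF : nat -> R) t :
  (forall i, (i < n)%nat -> derivable_pt_lim (fun s => F s i) t (dF i)) ->
  derivable_pt_lim (fun s => rsum n (F s)) t (rsum n dF).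
Proof.
  induction n; intros H; simpl.
  - apply derivable_pt_lim_const.
  - apply (derivable_pt_lim_plus (fun s => rsum n (F s)) (fun s => F s n)).
    + apply IHn. intros; apply H; lia.
    + apply H; lia.
Qed.

Lemma deriv_cmul f a x l : derivable_pt_lim f x l ->
  derivable_pt_lim (fun s => a * f s) x (a * l).
Proof. intros H. apply (derivable_pt_lim_scal f a x l H). Qed.

Lemma deriv_sq f a x l : derivable_pt_lim f x l ->
  derivable_pt_lim (fun s => (f s - a) * (f s - a)) x (2 * l * (f x - a)).
Proof.
  intros H.
  assert (H1 : derivable_pt_lim (fun s => f s - a) x (l - 0)).
  { apply (derivable_pt_lim_minus f (fct_cte a)); auto. apply derivable_pt_lim_const. }
  replace (2 * l * (f x - a)) with ((l-0) * (f x - a) + (f x - a) * (l-0)) by ring.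
  apply (derivable_pt_lim_mult (fun s => f s - a) (fun s => f s - a)); auto.
Qed.

Lemma deriv_unique_local f g x l1 l2 d : 0 < d ->
  (forall y, Rabs (y - x) < d -> f y = g y) ->
  derivable_pt_lim f x l1 -> derivable_pt_lim g x l2 -> l1 = l2.
Proof.
  intros hd He H1 H2. apply (uniqueness_limite f x); auto.
  apply (deriv_local f g x l2 d); auto.
Qed.

Lemma deriv_eq f x l l' : derivable_pt_lim f x l -> l = l' -> derivable_pt_lim f x l'.
Proof. intros H ->; exact H. Qed.

Lemma rsum_ext n f g : (forall i, (i < n)%nat -> f i = g i) -> rsum n f = rsum n g.
Proof. induction n; intros H; simpl; auto. rewrite IHn, H; auto; intros; apply H; lia. Qed.

Lemma rsum_plus n f g : rsum n (fun i => f i + g i) = rsum n f + rsum n g.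
Proof. induction n; simpl; [ring|rewrite IHn; ring]. Qed.

Lemma rsum_scal n a f : rsum n (fun i => a * f i) = a * rsum n f.
Proof. induction n; simpl; [ring|rewrite IHn; ring]. Qed.

Lemma rsum_zero n f : (forall i, (i < n)%nat -> f i = 0) -> rsum n f = 0.
Proof. intros H. rewrite (rsum_ext n f (fun _ => 0)) by auto.
  induction n; simpl; [ring| rewrite IHn; [ring|intros; apply H; lia]]. Qed.

Lemma rsum_swap n m (f : nat -> nat -> R) :
  rsum n (fun i => rsum m (fun j => f i j)) = rsum m (fun j => rsum n (fun i => f i j)).
Proof.
  induction n; simpl.
  - symmetry; apply rsum_zero; auto.
  - rewrite IHn. rewrite <- rsum_plus. reflexivity.
Qed.

Lemma rsum_basis n k f : (k < n)%nat -> rsum n (fun i => basis k i * f i) = f k.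
Proof.
  induction n; intros Hk; [lia|]. simpl.
  destruct (Nat.eq_dec k n) as [->|Hne].
  - rewrite rsum_zero. unfold basis. destruct (Nat.eq_dec n n); [ring|tauto].
    intros i Hi. unfold basis. destruct (Nat.eq_dec i n); [lia|ring].
  - rewrite IHn by lia. unfold basis. destruct (Nat.eq_dec n k); [lia|ring].
Qed.

Lemma rsum_nonneg n f : (forall i, (i < n)%nat -> 0 <= f i) -> 0 <= rsum n f.
Proof. induction n; intros H; simpl; [lra|]. assert (0 <= rsum n f) by (apply IHn; intros; apply H; lia).
  assert (0 <= f n) by (apply H; lia). lra. Qed.

Lemma rsum_nonneg_zero n f : (forall i, (i < n)%nat -> 0 <= f i) -> rsum n f = 0 ->
  forall i, (i < n)%nat -> f i = 0.
Proof.
  induction n; intros H Hs i Hi; [lia|]. simpl in Hs.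
  assert (A : 0 <= rsum n f) by (apply rsum_nonneg; intros; apply H; lia).
  assert (B : 0 <= f n) by (apply H; lia).
  destruct (Nat.eq_dec i n) as [->|]; [lra|]. apply IHn; try lra; try lia. intros; apply H; lia.
Qed.

Lemma dot_ext n x x' y y' : veq n x x' -> veq n y y' -> dot n x y = dot n x' y'.
Proof. intros H1 H2. unfold dot. apply rsum_ext. intros i Hi. rewrite H1, H2; auto. Qed.

Lemma dot_comm n x y : dot n x y = dot n y x.
Proof. unfold dot. apply rsum_ext. intros; ring. Qed.

Lemma dot_basis n v k : (k < n)%nat -> dot n v (basis k) = v k.
Proof. intros Hk. unfold dot. rewrite <- (rsum_basis n k v Hk). apply rsum_ext; intros; ring. Qed.

Lemma dot_zero_l n x y : veq n x (fun _ => 0) -> dot n x y = 0.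
Proof. intros H. unfold dot. apply rsum_zero. intros i Hi. rewrite H; auto; ring. Qed.

Lemma dot_rsum_l n m (x : nat -> R) (F : nat -> vec) z :
  dot n (fun k => rsum m (fun i => x i * F i k)) z = rsum m (fun i => x i * dot n (F i) z).
Proof.
  unfold dot. rewrite (rsum_ext n _ (fun k => rsum m (fun i => x i * F i k * z k))).
  2:{ intros; rewrite (Rmult_comm _ (z i)), <- rsum_scal. apply rsum_ext; intros; ring. }
  rewrite rsum_swap. apply rsum_ext. intros i _. rewrite <- rsum_scal. apply rsum_ext; intros; ring.
Qed.

Lemma dot_lin_l n a b x y z :
  dot n (fun k => a * x k + b * y k) z = a * dot n x z + b * dot n y z.
Proof. unfold dot. rewrite <- !rsum_scal, <- rsum_plus. apply rsum_ext; intros; ring. Qed.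

Lemma dot_self_zero n x : dot n x x = 0 -> veq n x (fun _ => 0).
Proof.
  intros H i Hi. assert (E := rsum_nonneg_zero n (fun i => x i * x i)).
  assert (x i * x i = 0) by (apply E; auto; intros; apply Rle_0_sqr).
  nra.
Qed.

Section Br.
Variable n : nat.
Variable c : nat -> nat -> nat -> R.

Lemma bracket_ext x x' y y' : veq n x x' -> veq n y y' -> bracket n c x y = bracket n c x' y'.
Proof. intros H1 H2. extensionality k. unfold bracket. apply rsum_ext; intros i Hi.
  apply rsum_ext; intros j Hj. rewrite H1, H2; auto. Qed.

Lemma bracket_lin_l a b x y w k :
  bracket n c (fun i => a * x i + b * y i) w k = a * bracket n c x w k + b * bracket n c y w k.
Proof. unfold bracket. rewrite <- !rsum_scal, <- rsum_plus. apply rsum_ext; intros i _.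
  rewrite <- !rsum_scal, <- rsum_plus. apply rsum_ext; intros; ring. Qed.

Lemma bracket_lin_r a b x y w k :
  bracket n c w (fun i => a * x i + b * y i) k = a * bracket n c w x k + b * bracket n c w y k.
Proof. unfold bracket. rewrite <- !rsum_scal, <- rsum_plus. apply rsum_ext; intros i _.
  rewrite <- !rsum_scal, <- rsum_plus. apply rsum_ext; intros; ring. Qed.

Lemma bracket_zero_l x y : veq n x (fun _ => 0) -> bracket n c x y = fun _ => 0.
Proof. intros H. extensionality k. unfold bracket. apply rsum_zero. intros i Hi.
  apply rsum_zero. intros j Hj. rewrite H; auto; ring. Qed.

Lemma bracket_basis_l i y k : (i < n)%nat ->
  bracket n c (basis i) y k = rsum n (fun j => c i j k * y j).
Proof. intros Hi. unfold bracket.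
  rewrite <- (rsum_basis n i (fun i' => rsum n (fun j => c i' j k * y j)) Hi).
  apply rsum_ext; intros i' _. rewrite <- rsum_scal. apply rsum_ext; intros; ring. Qed.

Lemma bracket_basis_r x j k : (j < n)%nat ->
  bracket n c x (basis j) k = rsum n (fun i => c i j k * x i).
Proof. intros Hj. unfold bracket. apply rsum_ext; intros i _.
  rewrite <- (rsum_basis n j (fun j' => c i j' k * x i) Hj). apply rsum_ext; intros; ring. Qed.

Lemma bracket_expand_l x y k :
  bracket n c x y k = rsum n (fun i => x i * bracket n c (basis i) y k).
Proof. rewrite (rsum_ext n _ (fun i => x i * rsum n (fun j => c i j k * y j))).
  2:{ intros; rewrite bracket_basis_l; auto. }
  unfold bracket. apply rsum_ext; intros i _. rewrite <- rsum_scal. apply rsum_ext; intros; ring. Qed.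

Lemma bracket_expand_r x y k :
  bracket n c x y k = rsum n (fun j => y j * bracket n c x (basis j) k).
Proof. rewrite (rsum_ext n _ (fun j => y j * rsum n (fun i => c i j k * x i))).
  2:{ intros; rewrite bracket_basis_r; auto. }
  unfold bracket. rewrite rsum_swap. apply rsum_ext; intros i _. rewrite <- rsum_scal. apply rsum_ext; intros; ring. Qed.

Lemma dot_bracket_expand x y z :
  dot n (bracket n c x y) z = rsum n (fun i => x i * dot n (bracket n c (basis i) y) z).
Proof. rewrite <- dot_rsum_l. apply dot_ext; [|intros ? ?; reflexivity].
  intros k _. apply bracket_expand_l. Qed.

Hypothesis Hanti : forall i j k, (i < n)%nat -> (j < n)%nat -> (k < n)%nat -> c i j k = - c j i k.

Lemma bracket_anti x y k : (k < n)%nat -> bracket n c x y k = - bracket n c y x k.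
Proof. intros Hk. unfold bracket. rewrite rsum_swap.
  rewrite (rsum_ext n _ (fun j => -1 * rsum n (fun i => c j i k * y j * x i))).
  2:{ intros j Hj. rewrite <- rsum_scal. apply rsum_ext. intros i Hi. rewrite Hanti; auto. ring. }
  rewrite rsum_scal. ring. Qed.

Lemma bracket_self x : veq n (bracket n c x x) (fun _ => 0).
Proof. intros k Hk. assert (H := bracket_anti x x k Hk). lra. Qed.

End Br.

Lemma rsum_opp n f : rsum n (fun i => - f i) = - rsum n f.
Proof. induction n; simpl; [ring|rewrite IHn; ring]. Qed.

Definition Lop n c (V0 a : vec) : vec := fun i => - dot n (bracket n c (basis i) a) V0.

Section L.
Variable n : nat.
Variable c : nat -> nat -> nat -> R.
Hypothesis Hanti : forall i j k, (i < n)%nat -> (j < n)%nat -> (k < n)%nat -> c i j k = - c j i k.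
Hypothesis Hcent : forall x y, in_center n c (bracket n c x y).
Variable V0 : vec.

Lemma center_r cc y : in_center n c cc -> veq n (bracket n c y cc) (fun _ => 0).
Proof. intros H k Hk. rewrite bracket_anti; auto. rewrite H; auto. ring. Qed.

Lemma L_ext a a' : veq n a a' -> Lop n c V0 a = Lop n c V0 a'.
Proof. intros H. extensionality i. unfold Lop. rewrite (bracket_ext n c (basis i) (basis i) a a'); auto.
  intros ? ?; reflexivity. Qed.

Lemma L_lin p q a b i :
  Lop n c V0 (fun j => p * a j + q * b j) i = p * Lop n c V0 a i + q * Lop n c V0 b i.
Proof. unfold Lop.
  rewrite (dot_ext n _ (fun k => p * bracket n c (basis i) a k + q * bracket n c (basis i) b k) V0 V0).
  - rewrite dot_lin_l. ring.
  - intros k _. apply bracket_lin_r.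
  - intros ? ?; reflexivity. Qed.

Lemma L_expand a i : Lop n c V0 a i = rsum n (fun j => Lop n c V0 (basis j) i * a j).
Proof. unfold Lop.
  rewrite (dot_ext n _ (fun k => rsum n (fun j => a j * bracket n c (basis i) (basis j) k)) V0 V0).
  - rewrite dot_rsum_l. rewrite <- rsum_opp. apply rsum_ext; intros. change (fun k => bracket n c (basis i) (basis i0) k) with (bracket n c (basis i) (basis i0)). ring.
  - intros k _. apply bracket_expand_r.
  - intros ? ?; reflexivity. Qed.

Lemma dot_L_l a b : dot n (Lop n c V0 a) b = - dot n (bracket n c b a) V0.
Proof. rewrite dot_bracket_expand. unfold dot at 1. unfold Lop.
  rewrite <- rsum_opp. apply rsum_ext; intros; cbv beta; ring. Qed.

Lemma dot_bracket_anti a b : dot n (bracket n c b a) V0 = - dot n (bracket n c a b) V0.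
Proof. rewrite (dot_ext n _ (fun k => -1 * bracket n c a b k + 0 * V0 k) V0 V0).
  - rewrite dot_lin_l. ring.
  - intros k Hk. rewrite bracket_anti; auto. ring.
  - intros ? ?; reflexivity. Qed.

Lemma L_skew a b : dot n (Lop n c V0 a) b = - dot n a (Lop n c V0 b).
Proof. rewrite (dot_comm n a), !dot_L_l, dot_bracket_anti. ring. Qed.

Lemma L_self a : dot n (Lop n c V0 a) a = 0.
Proof. assert (H := L_skew a a). rewrite dot_comm in H. rewrite dot_comm. lra. Qed.

Lemma L_center cc a : in_center n c cc -> dot n cc (Lop n c V0 a) = 0.
Proof. intros H. rewrite dot_comm, dot_L_l, dot_zero_l; [ring|]. apply H. Qed.

Lemma nabla_self x i : (i < n)%nat -> nabla n c x x i = dot n (bracket n c (basis i) x) x.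
Proof. intros Hi. unfold nabla. rewrite dot_basis by auto.
  rewrite (bracket_self n c Hanti x i Hi).
  rewrite (dot_ext n (bracket n c x (basis i)) (fun k => -1 * bracket n c (basis i) x k + 0 * x k) x x).
  - rewrite dot_lin_l. field.
  - intros k Hk. rewrite bracket_anti; auto. ring.
  - intros ? ?; reflexivity. Qed.

End L.

Lemma deriv_dist n (W : R -> vec) (dWt : vec) (A : vec) t :
  vderiv n W t dWt ->
  derivable_pt_lim (fun s => rsum n (fun i => (W s i - A i) * (W s i - A i))) t
    (2 * dot n dWt (vsub (W t) A)).
Proof.
  intros H. replace (2 * dot n dWt (vsub (W t) A)) with
    (rsum n (fun i => 2 * dWt i * (W t i - A i))).
  - apply deriv_rsum. intros i Hi. apply deriv_sq. apply H; auto.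
  - unfold dot, vsub. rewrite <- rsum_scal. apply rsum_ext; intros; ring.
Qed.

Lemma dist_dot n x A : rsum n (fun i => (x i - A i) * (x i - A i)) = dot n (vsub x A) (vsub x A).
Proof. reflexivity. Qed.

Lemma core n c (hN : two_step_nilpotent n c) g dg a b t0 :
  a < t0 < b -> is_geodesic n c g dg a b ->
  ~ veq n (lvel n c g dg t0) (fun _ => 0) -> gauss_harmonic_at n c g dg t0 ->
  veq n (Lop n c (lvel n c g dg t0) (lvel n c g dg t0)) (fun _ => 0) /\
  forall t, a < t < b -> veq n (g t) (gmul n c (g t0) (vscale (t - t0) (lvel n c g dg t0))).
Proof.
  intros Ht0 [Hdg [dW HdW]] Hnz Hh.
  destruct hN as [Hanti [Hnil _]].
  assert (Hcent : forall x y, in_center n c (bracket n c x y)) by (intros x y z; apply Hnil).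
  unfold gauss_harmonic_at in Hh. cbv zeta in Hh.
  set (W := lvel n c g dg) in *.
  set (V0 := W t0) in *.
  assert (Hcons : forall cc, in_center n c cc -> forall t, a < t < b -> dot n cc (W t) = dot n cc V0).
  { intros cc Hcc. apply (const_on (fun t => dot n cc (W t)) a b t0 Ht0).
    intros t Ht. destruct (HdW t Ht) as [HdWt Heq].
    replace 0 with (rsum n (fun i => cc i * dW t i)).
    - unfold dot. apply deriv_rsum. intros i Hi. apply deriv_cmul. apply HdWt; auto.
    - rewrite (rsum_ext n _ (fun i => - (cc i * dot n (bracket n c (basis i) (W t)) (W t)))).
      + rewrite rsum_opp, <- dot_bracket_expand. rewrite dot_zero_l; [ring|]. apply Hcc.
      + intros i Hi. rewrite <- nabla_self by auto. assert (E := Heq i Hi). unfold vadd in E.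
        replace (dW t i) with (- nabla n c (W t) (W t) i) by lra. ring. }
  assert (HL : forall t, a < t < b -> veq n (dW t) (Lop n c V0 (W t))).
  { intros t Ht i Hi. destruct (HdW t Ht) as [_ Heq]. assert (E := Heq i Hi). unfold vadd in E.
    rewrite nabla_self in E by auto. unfold Lop. rewrite <- (Hcons _ (Hcent _ _) t Ht).
    lra. }
  assert (Hnorm : forall t, a < t < b -> dot n (W t) (W t) = dot n V0 V0).
  { intros t Ht.
    assert (K := const_on (fun s => rsum n (fun i => (W s i - 0) * (W s i - 0))) a b t0 Ht0).
    assert (E : forall x, dot n x x = rsum n (fun i => (x i - 0) * (x i - 0)))
      by (intros; unfold dot; apply rsum_ext; intros; ring).
    rewrite !E. apply K; auto. intros s Hs.
    eapply deriv_eq.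
    - apply (deriv_dist n W (dW s) (fun _ => 0)). apply (proj1 (HdW s Hs)).
    - rewrite (dot_ext n _ (Lop n c V0 (W s)) _ (W s)); [|apply HL; auto|intros ? ?; unfold vsub; ring].
      rewrite L_self; auto. ring. }
  set (s2 := dot n V0 V0) in *.
  assert (Hs2 : 0 < s2).
  { assert (0 <= s2) by (apply rsum_nonneg; intros; apply Rle_0_sqr).
    destruct (Req_dec s2 0) as [E|]; [|lra]. exfalso. apply Hnz, dot_self_zero, E. }
  set (s := sqrt s2).
  assert (Hs : 0 < s) by (apply sqrt_lt_R0; auto).
  assert (Hsp : forall t, a < t < b -> vnorm n (W t) = s).
  { intros t Ht. unfold vnorm. rewrite Hnorm; auto. }
  set (Y := Lop n c V0 V0).
  assert (HY : veq n Y (fun _ => 0)).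
  { destruct Hh as (du & dw & (d & hd & Hdu) & Hdw & Hacc).
    set (r := Rmin d (Rmin (t0 - a) (b - t0))).
    assert (Hr : 0 < r) by (unfold r; repeat apply Rmin_pos; lra).
    assert (Hrin : forall t, Rabs (t - t0) < r -> Rabs (t - t0) < d /\ a < t < b).
    { intros t Htr. unfold r in Htr.
      assert (Rmin d (Rmin (t0 - a) (b - t0)) <= d) by apply Rmin_l.
      assert (Rmin d (Rmin (t0 - a) (b - t0)) <= Rmin (t0 - a) (b - t0)) by apply Rmin_r.
      assert (Rmin (t0 - a) (b - t0) <= t0 - a) by apply Rmin_l.
      assert (Rmin (t0 - a) (b - t0) <= b - t0) by apply Rmin_r.
      apply Rabs_def2 in Htr. split; [apply Rabs_def1|]; lra. }
    assert (Hdu' : forall t, Rabs (t - t0) < r -> forall i, (i < n)%nat -> du t i = / s * dW t i).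
    { intros t Htr i Hi. destruct (Hrin t Htr) as [Htd Htab].
      apply (deriv_unique_local (fun t' => vscale (/ vnorm n (W t')) (W t') i)
               (fun t' => / s * W t' i) t _ _ (Rmin (t - a) (b - t))).
      - apply Rmin_pos; lra.
      - intros y Hy. assert (a < y < b).
        { assert (Rmin (t - a) (b - t) <= t - a) by apply Rmin_l.
          assert (Rmin (t - a) (b - t) <= b - t) by apply Rmin_r.
          apply Rabs_def2 in Hy. lra. }
        unfold vscale. rewrite Hsp; auto.
      - apply (Hdu t Htd i Hi).
      - apply deriv_cmul. apply (proj1 (HdW t Htab) i Hi). }
    assert (Hdw' : forall i, (i < n)%nat -> dw i = / s * (/ s * Lop n c V0 Y i)).
    { intros i Hi.
      apply (deriv_unique_local (fun t => vscale (/ vnorm n (W t)) (du t) i)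
          (fun t => / s * (/ s * rsum n (fun j => Lop n c V0 (basis j) i * W t j))) t0 _ _ r Hr).
      - intros y Hy. destruct (Hrin y Hy) as [_ Hyab]. unfold vscale.
        rewrite Hsp, Hdu', HL, L_expand; auto.
      - apply (Hdw i Hi).
      - apply deriv_cmul, deriv_cmul.
        eapply deriv_eq.
        + apply deriv_rsum. intros j Hj. apply deriv_cmul. apply (proj1 (HdW t0 Ht0) j Hj).
        + rewrite <- L_expand. rewrite (L_ext n c V0 (dW t0) Y) by (apply HL; auto). reflexivity. }
    assert (HsV : vnorm n V0 = s) by reflexivity. rewrite HsV in Hacc.
    assert (Dsc : forall p q x y, dot n (vscale p x) (vscale q y) = p * q * dot n x y).
    { intros p q x y. unfold dot, vscale. rewrite <- rsum_scal. apply rsum_ext; intros; ring. }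
    rewrite Dsc in Hacc.
    set (LL := Lop n c V0 Y) in *.
    assert (Hdd : dot n dw V0 = / s * / s * dot n LL V0).
    { rewrite (dot_ext n dw (vscale (/ s * / s) LL) V0 (vscale 1 V0)).
      - rewrite Dsc. ring.
      - intros i Hi. rewrite Hdw'; auto. unfold vscale. ring.
      - intros i Hi. unfold vscale. ring. }
    rewrite Hdd in Hacc.
    set (mu0 := dot n LL V0) in *.
    assert (HLL : forall i, (i < n)%nat -> LL i = / (s * s) * mu0 * V0 i).
    { intros i Hi. assert (E := Hacc i Hi). unfold vsub, vscale in E. rewrite Hdw' in E by auto.
      assert (Hs0 : s <> 0) by lra.
      assert (E2 : LL i - / (s * s) * mu0 * V0 i =
        s * s * s * (/ s * (/ s * (/ s * LL i)) - / s * / s * (/ s * / s * mu0) * (/ s * V0 i)))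
        by (field; auto).
      rewrite E, Rmult_0_r in E2. lra. }
    assert (Hmu : mu0 = - dot n Y Y).
    { unfold mu0, LL. rewrite (L_skew n c Hanti V0 Y V0). reflexivity. }
    apply dot_self_zero.
    destruct (Req_dec (dot n Y Y) 0) as [E|Hne]; auto. exfalso. apply Hne.
    set (mu := / (s * s) * mu0).
    assert (Hmu0 : mu <> 0).
    { unfold mu. rewrite Hmu. apply Rmult_integral_contrapositive_currified.
      - apply Rinv_neq_0_compat. nra.
      - lra. }
    apply dot_zero_l. intros k Hk.
    unfold Y, Lop.
    rewrite (dot_ext n (bracket n c (basis k) V0) (bracket n c (basis k) V0) V0 (vscale (/ mu) LL)).
    - rewrite dot_comm.
      rewrite (dot_ext n (vscale (/ mu) LL) (fun i => / mu * LL i + 0 * LL i) _ (bracket n c (basis k) V0));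
        [| intros ? ?; unfold vscale; ring | intros ? ?; reflexivity].
      rewrite dot_lin_l, dot_comm. unfold LL. rewrite L_center by apply Hcent. ring.
    - intros ? ?; reflexivity.
    - intros i Hi. unfold vscale. rewrite HLL by auto. fold mu. field. auto. }
  assert (HWc : forall t, a < t < b -> veq n (W t) V0).
  { intros t Ht.
    assert (K := const_on (fun s => rsum n (fun i => (W s i - V0 i) * (W s i - V0 i))) a b t0 Ht0).
    assert (Q : dot n (vsub (W t) V0) (vsub (W t) V0) = 0).
    { change (rsum n (fun i => (W t i - V0 i) * (W t i - V0 i)) = 0).
      rewrite K; auto.
      - apply rsum_zero. intros; unfold V0; ring.
      - intros s' Hs'. eapply deriv_eq.
        + apply (deriv_dist n W (dW s') V0). apply (proj1 (HdW s' Hs')).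
        + rewrite (dot_ext n _ (fun i => 1 * Lop n c V0 (vsub (W s') V0) i + 1 * Y i) _ (vsub (W s') V0)).
          * rewrite dot_lin_l, L_self by auto. rewrite dot_zero_l by auto. ring.
          * intros i Hi. rewrite HL by auto. unfold Y.
            rewrite <- L_lin. apply (f_equal (fun v => Lop n c V0 v i)). extensionality j. unfold vsub. ring.
          * intros ? ?; reflexivity. }
    intros i Hi. assert (E := dot_self_zero n _ Q i Hi). unfold vsub in E. lra. }
  split; [exact HY|].
  assert (Hdgt : forall t, a < t < b -> forall i, (i < n)%nat ->
            dg t i = 1 * V0 i + 1 / 2 * bracket n c (g t) (dg t) i).
  { intros t Ht i Hi. rewrite <- (HWc t Ht i Hi). unfold W, lvel, dLinv, vsub, vscale. ring. }
  set (K0 := bracket n c (g t0) V0).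
  assert (HK : forall k, (k < n)%nat -> forall t, a < t < b -> bracket n c (g t) V0 k = K0 k).
  { intros k Hk. apply (const_on (fun s => bracket n c (g s) V0 k) a b t0 Ht0).
    intros t Ht.
    replace (fun s => bracket n c (g s) V0 k) with
      (fun s => rsum n (fun i => bracket n c (basis i) V0 k * g s i)).
    2:{ extensionality s'. rewrite bracket_expand_l. apply rsum_ext; intros; ring. }
    eapply deriv_eq.
    - apply deriv_rsum. intros i Hi. apply deriv_cmul. apply (Hdg t Ht i Hi).
    - rewrite (rsum_ext n _ (fun i => dg t i * bracket n c (basis i) V0 k)) by (intros; ring).
      rewrite <- bracket_expand_l.
      rewrite (bracket_ext n c (dg t) (fun i => 1 * V0 i + 1 / 2 * bracket n c (g t) (dg t) i) V0 V0).
      + rewrite bracket_lin_l. rewrite (bracket_self n c Hanti V0 k Hk).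
        rewrite (Hcent (g t) (dg t) V0 k Hk). ring.
      + intros i Hi. apply Hdgt; auto.
      + intros ? ?; reflexivity. }
  assert (Hbr : forall t, a < t < b -> forall k, (k < n)%nat -> bracket n c (g t) (dg t) k = K0 k).
  { intros t Ht k Hk.
    assert (E : bracket n c (g t) (dg t) =
                bracket n c (g t) (fun i => 1 * V0 i + 1 / 2 * bracket n c (g t) (dg t) i)).
    { apply bracket_ext; [intros ? ?; reflexivity|]. intros i Hi. apply Hdgt; auto. }
    rewrite E, bracket_lin_r. rewrite (center_r n c Hanti _ _ (Hcent _ _) k Hk).
    rewrite HK; auto. ring. }
  intros t Ht i Hi.
  set (C := V0 i + 1 / 2 * K0 i).
  assert (Hg : g t i - C * t = g t0 i - C * t0).
  { apply (const_on (fun s => g s i - C * s) a b t0 Ht0); auto.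
    intros s' Hs'. eapply deriv_eq.
    - apply (derivable_pt_lim_minus (fun s => g s i) (fun s => C * s)).
      + apply (Hdg s' Hs' i Hi).
      + apply deriv_cmul. apply derivable_pt_lim_id.
    - rewrite Hdgt, Hbr by auto. unfold C. ring. }
  unfold gmul, vadd, vscale.
  rewrite (bracket_ext n c (g t0) (g t0) (fun j => (t - t0) * V0 j) (fun j => (t - t0) * V0 j + 0 * V0 j))
    by (intros ? ?; first [reflexivity|ring]).
  rewrite bracket_lin_r. fold K0. unfold C in Hg. nra.
Qed.

Theorem mainTheorem8 (n : nat) (c : nat -> nat -> nat -> R)
  (hN : two_step_nilpotent n c) :
  (forall (g dg : R -> vec) (a b : R) (X Z : vec),
     a < 0 < b ->
     is_geodesic n c g dg a b ->
     veq n (g 0) (fun _ => 0) ->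
     in_V n c X -> in_center n c Z ->
     veq n (dg 0) (vadd X Z) ->
     ~ veq n (vadd X Z) (fun _ => 0) ->
     gauss_harmonic_at n c g dg 0 ->
     veq n (Jmap n c Z X) (fun _ => 0) /\
     (forall t, a < t < b -> veq n (g t) (vscale t (vadd X Z))))
  /\
  (forall (g dg : R -> vec) (a b t0 : R),
     a < t0 < b ->
     is_geodesic n c g dg a b ->
     ~ veq n (dg t0) (fun _ => 0) ->
     gauss_harmonic_at n c g dg t0 ->
     exists Y : vec, forall t, a < t < b ->
       veq n (g t) (gmul n c (g t0) (vscale (t - t0) Y))).
Proof.
  assert (hN' := hN). destruct hN' as [Hanti [Hnil _]].
  assert (Hcent : forall x y, in_center n c (bracket n c x y)) by (intros x y z; apply Hnil).
  split.
  - intros g dg a b X Z Hab Hgeo Hg0 HX HZ Hdg0 Hnz Hh.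
    set (W0 := lvel n c g dg 0).
    assert (HW0 : veq n W0 (fun i => 1 * X i + 1 * Z i)).
    { intros i Hi. unfold W0, lvel, dLinv, vsub, vscale.
      rewrite (bracket_zero_l n c (g 0) (dg 0) Hg0). rewrite Hdg0 by auto. unfold vadd. ring. }
    assert (Hnz' : ~ veq n W0 (fun _ => 0)).
    { intros H. apply Hnz. intros i Hi. rewrite <- (H i Hi), HW0 by auto. unfold vadd. ring. }
    destruct (core n c hN g dg a b 0 Hab Hgeo Hnz' Hh) as [HY Hg].
    fold W0 in HY, Hg. split.
    + intros j Hj. rewrite <- (HY j Hj). unfold Jmap, Lop.
      rewrite (dot_bracket_anti n c Hanti W0 W0 (basis j)).
      rewrite Ropp_involutive.
      rewrite (dot_ext n (bracket n c W0 (basis j)) (fun k => 1 * bracket n c X (basis j) k + 0 * Z k)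
                 W0 (fun i => 1 * X i + 1 * Z i)); auto.
      * rewrite dot_lin_l. rewrite (dot_comm n _ (fun i => 1 * X i + 1 * Z i)), dot_lin_l.
        rewrite (HX _ (Hcent _ _)). rewrite dot_comm. ring.
      * intros k Hk. rewrite (bracket_ext n c W0 (fun i => 1 * X i + 1 * Z i) (basis j) (basis j)).
        -- rewrite bracket_lin_l. rewrite (HZ (basis j) k Hk). ring.
        -- exact HW0.
        -- intros ? ?; reflexivity.
    + intros t Ht i Hi. rewrite (Hg t Ht i Hi). unfold gmul, vadd, vscale.
      rewrite (bracket_zero_l n c (g 0) _ Hg0). rewrite Hg0, HW0 by auto. ring.
  - intros g dg a b t0 Ht0 Hgeo Hnz Hh.
    assert (Hnz' : ~ veq n (lvel n c g dg t0) (fun _ => 0)).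
    { intros H. apply Hnz.
      assert (E : forall i, (i < n)%nat -> dg t0 i = 0 * dg t0 i + 1 / 2 * bracket n c (g t0) (dg t0) i).
      { intros i Hi. assert (E := H i Hi). unfold lvel, dLinv, vsub, vscale in E. lra. }
      assert (Hb : veq n (bracket n c (g t0) (dg t0)) (fun _ => 0)).
      { intros k Hk. rewrite (bracket_ext n c (g t0) (g t0) (dg t0)
            (fun i => 0 * dg t0 i + 1 / 2 * bracket n c (g t0) (dg t0) i)).
        - rewrite bracket_lin_r, (center_r n c Hanti _ _ (Hcent _ _) k Hk). ring.
        - intros ? ?; reflexivity.
        - exact E. }
      intros i Hi. rewrite E, Hb by auto. ring. }
    destruct (core n c hN g dg a b t0 Ht0 Hgeo Hnz' Hh) as [_ Hg].
    exists (lvel n c g dg t0). exact Hg.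
Qed.
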